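(* Let $m\ge d\ge1$, $\lambda=d/m$, and let $\mathcal L=\sum_ic_i(\partial_x\partial_y)^i$ be a linear differential operator with constant coefficients $c_i$. For bivariate polynomials $p(x,y)=y^{m-d}f(xy)$ and $q(x,y)=y^{m-d}g(xy)$ with $f,g$ of degree at most $d$, \[ \mathcal L\{p\boxplus_{d,\lambda}q\}=\mathcal L\{p\}\boxplus_{d,\lambda}q=p\boxplus_{d,\lambda}\mathcal L\{q\}. \]
   Context: For $f=\sum_{i=0}^d(-1)^ia_ix^{d-i}$, $g=\sum_{i=0}^d(-1)^ib_ix^{d-i}$ (degree at most $d$): $(f\boxplus_{d,\lambda}g)(x)=\sum_{k=0}^dx^{d-k}(-1)^k\sum_{i+j=k}\frac{(d-i)!(d-j)!}{d!(d-k)!}\frac{(m-i)!(m-j)!}{m!(m-k)!}a_ib_j$, and for $p=y^{m-d}f(xy)$, $q=y^{m-d}g(xy)$, $p\boxplus_{d,\lambda}q:=y^{m-d}(f\boxplus_{d,\lambda}g)(xy)$. Note $(\partial_x\partial_y)$ maps the space $\{y^{m-d}h(xy):\deg h\le d\}$ into itself. *)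

(* Defs.v *)
(* Bivariate polynomials in x,y are {poly {poly R}}:
   the inner variable is x, the outer variable ('X at the outer level) is y. *)
From HB Require Import structures.
From mathcomp Require Import all_boot all_order all_algebra.
Set Implicit Arguments. Unset Strict Implicit. Unset Printing Implicit Defensive.
Import Order.TTheory GRing.Theory Num.Theory.
Local Open Scope ring_scope.

Section Defs.
Variable R : numFieldType.

Definition bweight (d m i j k : nat) : R :=
  (((d - i)`! * (d - j)`!)%:R / ((d`! * (d - k)`!)%:R)) *
  (((m - i)`! * (m - j)`!)%:R / ((m`! * (m - k)`!)%:R)).

(* a_i such that f = \sum_i (-1)^i a_i x^(d-i) *)
Definition scoef (d : nat) (f : {poly R}) (i : nat) : R := (-1) ^+ i * f`_(d - i).

Definition boxplus (d m : nat) (f g : {poly R}) : {poly R} :=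
  \sum_(k < d.+1)
    ((-1) ^+ k * \sum_(i < k.+1)
        bweight d m i (k - i) k * scoef d f i * scoef d g (k - i)) *: 'X^(d - k).

(* y^(m-d) f(xy) as a bivariate polynomial *)
Definition embed (d m : nat) (f : {poly R}) : {poly {poly R}} :=
  \sum_(i < d.+1) (f`_i *: 'X^i)%:P * 'X^(i + (m - d)).

(* recovers h from y^(m-d) h(xy) (coefficient of x^i y^(i+m-d)) *)
Definition unembed (d m : nat) (P : {poly {poly R}}) : {poly R} :=
  \poly_(i < d.+1) (P`_(i + (m - d)))`_i.

Definition boxplus2 (d m : nat) (p q : {poly {poly R}}) : {poly {poly R}} :=
  embed d m (boxplus d m (unembed d m p) (unembed d m q)).

Definition Dx (P : {poly {poly R}}) : {poly {poly R}} := map_poly (@deriv R) P.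
Definition Dy (P : {poly {poly R}}) : {poly {poly R}} := deriv P.
Definition Dxy (P : {poly {poly R}}) : {poly {poly R}} := Dx (Dy P).

Definition Lop (c : seq R) (P : {poly {poly R}}) : {poly {poly R}} :=
  \sum_(i < size c) (c`_i)%:P%:P * iter i Dxy P.

End Defs.

(* Main.v *)
Require Import Defs.
From HB Require Import structures.
From mathcomp Require Import all_boot all_order all_algebra.
From mathcomp Require Import zify ring.
Import Order.TTheory GRing.Theory Num.Theory.
Local Open Scope ring_scope.

Section Proof.
Variable R : numFieldType.
Variables d m : nat.
Hypothesis dm : (d <= m)%N.
Implicit Types (f g h : {poly R}) (c : seq R).

Definition Dd (h : {poly R}) : {poly R} :=
  \poly_(i < d) ((i.+1 * (i.+1 + (m - d)))%:R * h`_i.+1).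

Definition bc (f g : {poly R}) (k : nat) : R :=
  \sum_(i < k.+1) bweight R d m i (k - i) k * scoef d f i * scoef d g (k - i).

Definition LD (c : seq R) (h : {poly R}) : {poly R} :=
  \sum_(i < size c) c`_i *: iter i Dd h.

Lemma sum_pick (V : nmodType) (F : nat -> V) j :
  \sum_(i < d.+1) (if (i : nat) == j then F j else 0) = if (j <= d)%N then F j else 0.
Proof.
case: (leqP j d) => H.
  rewrite (bigD1 (@Ordinal d.+1 j H)) //= eqxx big1 ?addr0 // => i ne.
  rewrite -val_eqE /= in ne. by rewrite (negbTE ne).
rewrite big1 // => i _; rewrite ifF //; apply/eqP => e; have := ltn_ord i; lia.
Qed.

Lemma coef_embed (h : {poly R}) n j :
  ((embed d m h)`_n)`_j = if (n == j + (m - d))%N && (j <= d)%N then h`_j else 0.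
Proof.
rewrite /embed coef_sum coef_sum.
transitivity (\sum_(i < d.+1) (if (i : nat) == j then (if (n == j + (m - d))%N then h`_j else 0) else 0)).
  apply: eq_bigr => i _; rewrite coefMXn.
  case: ltnP => H1.
    rewrite coef0; case: eqP => // e; rewrite ifF //; apply/eqP; lia.
  rewrite coefC; case: eqP => e.
    have -> : n = (i + (m - d))%N by lia.
    rewrite coefZ coefXn eq_sym; case: eqP => [->|ne]; first by rewrite eqxx mulr1.
    by rewrite mulr0.
  rewrite coef0; case: eqP => // e2; rewrite ifF //; apply/eqP; lia.
rewrite (@sum_pick _ (fun j => if (n == j + (m - d))%N then h`_j else 0)) /=; case: (j <= d)%N; rewrite ?andbT ?andbF //.
Qed.

Lemma coef_Dxy (P : {poly {poly R}}) n j :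
  ((Dxy P)`_n)`_j = ((P`_n.+1)`_j.+1) *+ n.+1 *+ j.+1.
Proof.
by rewrite /Dxy /Dx /Dy coef_map_id0 ?deriv0 // coef_deriv coef_deriv coefMn.
Qed.

Lemma Dxy_embed h : Dxy (embed d m h) = embed d m (Dd h).
Proof.
apply/polyP => n; apply/polyP => j.
rewrite coef_Dxy !coef_embed coef_poly addSn eqSS.
case: eqP => e /=; last by rewrite mul0rn mul0rn.
case: (ltnP j d) => H.
  rewrite (ltnW H) -mulrnA mulr_natl; congr (_ *+ _); rewrite e; lia.
by rewrite !mul0rn; case: ifP.
Qed.

Lemma iter_Dxy_embed i h : iter i (@Dxy R) (embed d m h) = embed d m (iter i Dd h).
Proof. by elim: i => //= i IH; rewrite IH Dxy_embed. Qed.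

Lemma Lop_embed c h : Lop c (embed d m h) = embed d m (LD c h).
Proof.
apply/polyP => n; apply/polyP => j.
rewrite /Lop /LD coef_sum coef_sum coef_embed coef_sum.
under eq_bigr => i _ do rewrite !coefCM iter_Dxy_embed coef_embed.
case: ifP => _; first by apply: eq_bigr => i _; rewrite coefZ.
by rewrite big1 // => i _; rewrite mulr0.
Qed.

Lemma boxplus_trunc (f f' g g' : {poly R}) :
  (forall j, (j <= d)%N -> f'`_j = f`_j) -> (forall j, (j <= d)%N -> g'`_j = g`_j) ->
  boxplus d m f' g' = boxplus d m f g.
Proof.
move=> Hf Hg; rewrite /boxplus; apply: eq_bigr => k _; congr (_ *: _); congr (_ * _).
by apply: eq_bigr => i _; rewrite /scoef Hf ?Hg ?leq_subr.
Qed.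

Lemma unembed_embed h j : (j <= d)%N -> (unembed d m (embed d m h))`_j = h`_j.
Proof. by move=> H; rewrite coef_poly ltnS H coef_embed eqxx H. Qed.

Lemma boxplus2_embed f g :
  boxplus2 d m (embed d m f) (embed d m g) = embed d m (boxplus d m f g).
Proof. by rewrite /boxplus2 (@boxplus_trunc f _ g) // => j; apply: unembed_embed. Qed.

Lemma boxplusE f g : boxplus d m f g = \sum_(k < d.+1) ((-1) ^+ k * bc f g k) *: 'X^(d - k).
Proof. by []. Qed.

Lemma coef_boxplus f g n :
  (boxplus d m f g)`_n = if (n <= d)%N then (-1) ^+ (d - n) * bc f g (d - n) else 0.
Proof.
rewrite boxplusE coef_sum.
under eq_bigr => k _ do rewrite coefZ coefXn.
case: leqP => H.
  rewrite (bigD1 (@Ordinal d.+1 (d - n) (leq_subr n d))) //= subKn // eqxx mulr1.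
  rewrite big1 ?addr0 // => k ne; rewrite -val_eqE /= in ne.
  case: eqP => [e|_]; last by rewrite mulr0.
  exfalso; move/negP: ne; apply; apply/eqP; have := ltn_ord k; lia.
rewrite big1 // => k _; case: eqP => [e|_]; last by rewrite mulr0.
exfalso; lia.
Qed.

Lemma scoef_D0 h : scoef d (Dd h) 0 = 0.
Proof. by rewrite /scoef subn0 coef_poly ltnn mulr0. Qed.

Lemma scoef_DS h i : (i < d)%N ->
  scoef d (Dd h) i.+1 = - ((d - i) * (m - i))%:R * scoef d h i.
Proof.
move=> H; rewrite /scoef coef_poly ifT; last lia.
have e : (d - i.+1).+1 = (d - i)%N by lia.
have e2 : (d - i + (m - d))%N = (m - i)%N by lia.
rewrite e e2 exprS; ring.
Qed.

Lemma bwS I K : (I <= K)%N -> (K < d)%N ->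
  bweight R d m I.+1 (K - I) K.+1 * ((d - I) * (m - I))%:R =
  bweight R d m I (K - I) K * ((d - K) * (m - K))%:R :> R.
Proof.
move=> H1 H2; rewrite /bweight.
have e1 : (d - I = (d - I.+1).+1)%N by lia.
have e2 : (m - I = (m - I.+1).+1)%N by lia.
have e3 : (d - K = (d - K.+1).+1)%N by lia.
have e4 : (m - K = (m - K.+1).+1)%N by lia.
rewrite e1 e2 e3 e4 !factS !natrM.
have nz : forall k, (k`!)%:R != 0 :> R by move=> k; rewrite pnatr_eq0 -lt0n fact_gt0.
have nzS : forall k, (k.+1)%:R != 0 :> R by move=> k; rewrite pnatr_eq0.
field; by rewrite !nz !nat1r !nzS.
Qed.

Lemma bc_Dl f g K : (K < d)%N ->
  bc (Dd f) g K.+1 = - ((d - K) * (m - K))%:R * bc f g K.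
Proof.
move=> HK; rewrite /bc big_ord_recl /= scoef_D0 mulr0 mul0r add0r mulr_sumr.
apply: eq_bigr => i _; rewrite /bump /= add1n subSS.
have Hi : (i <= K)%N by rewrite -ltnS.
rewrite scoef_DS; last lia.
have bw := @bwS i K Hi HK.
transitivity (- (bweight R d m i.+1 (K - i) K.+1 * ((d - i) * (m - i))%:R)
   * scoef d f i * scoef d g (K - i)); first ring.
rewrite bw; ring.
Qed.

Lemma bweightC i j k : bweight R d m i j k = bweight R d m j i k.
Proof. by rewrite /bweight (mulnC (d - i)`!) (mulnC (m - i)`!). Qed.

Lemma bc_comm f g k : bc f g k = bc g f k.
Proof.
rewrite /bc (reindex_inj rev_ord_inj) /=; apply: eq_bigr => i _.
have Hi : (i <= k)%N by rewrite -ltnS.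
rewrite subSS subKn // bweightC mulrAC //.
Qed.

Lemma boxplus_comm f g : boxplus d m f g = boxplus d m g f.
Proof. by rewrite !boxplusE; apply: eq_bigr => k _; rewrite bc_comm. Qed.

Lemma D_boxplus_l f g : Dd (boxplus d m f g) = boxplus d m (Dd f) g.
Proof.
apply/polyP => n; rewrite coef_poly !coef_boxplus.
case: (ltnP n d) => H.
  rewrite (ltnW H).
  have e : (d - n = (d - n.+1).+1)%N by lia.
  rewrite e bc_Dl; last lia.
  have e3 : (d - (d - n.+1))%N = n.+1 by lia.
  have e4 : (m - (d - n.+1))%N = (n.+1 + (m - d))%N by lia.
  rewrite e3 e4 exprS; ring.
case: (leqP n d) => H2 //.
have -> : (d - n = 0)%N by lia.
by rewrite /bc big_ord1 /= scoef_D0 !(mulr0, mul0r).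
Qed.

Lemma D_boxplus_r f g : Dd (boxplus d m f g) = boxplus d m f (Dd g).
Proof. by rewrite boxplus_comm D_boxplus_l boxplus_comm. Qed.

Lemma boxplus_addl f1 f2 g :
  boxplus d m (f1 + f2) g = boxplus d m f1 g + boxplus d m f2 g.
Proof.
rewrite /boxplus -big_split; apply: eq_bigr => k _ /=; rewrite -scalerDl.
congr (_ *: _); rewrite -mulrDr; congr (_ * _); rewrite -big_split.
by apply: eq_bigr => i _ /=; rewrite /scoef coefD; ring.
Qed.

Lemma boxplus_addr f g1 g2 :
  boxplus d m f (g1 + g2) = boxplus d m f g1 + boxplus d m f g2.
Proof. by rewrite !(boxplus_comm f) boxplus_addl. Qed.

Lemma boxplus0l g : boxplus d m 0 g = 0.
Proof.
rewrite /boxplus big1 // => k _; rewrite big1 ?mulr0 ?scale0r // => i _.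
by rewrite /scoef coef0 !(mulr0, mul0r).
Qed.

Lemma boxplus0r f : boxplus d m f 0 = 0.
Proof. by rewrite boxplus_comm boxplus0l. Qed.

Lemma boxplus_scalel a f g : boxplus d m (a *: f) g = a *: boxplus d m f g.
Proof.
rewrite /boxplus scaler_sumr; apply: eq_bigr => k _; rewrite scalerA.
congr (_ *: _); rewrite mulrCA; congr (_ * _); rewrite mulr_sumr.
by apply: eq_bigr => i _ /=; rewrite /scoef coefZ; ring.
Qed.

Lemma boxplus_scaler a f g : boxplus d m f (a *: g) = a *: boxplus d m f g.
Proof. by rewrite !(boxplus_comm f) boxplus_scalel. Qed.

Lemma iter_boxplus_l i f g : iter i Dd (boxplus d m f g) = boxplus d m (iter i Dd f) g.
Proof. by elim: i => //= i ->; rewrite D_boxplus_l. Qed.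

Lemma iter_boxplus_r i f g : iter i Dd (boxplus d m f g) = boxplus d m f (iter i Dd g).
Proof. by elim: i => //= i ->; rewrite D_boxplus_r. Qed.

Lemma LD_boxplus_l c f g : boxplus d m (LD c f) g = LD c (boxplus d m f g).
Proof.
rewrite /LD (big_morph (fun h => boxplus d m h g) (fun x y => boxplus_addl x y g) (boxplus0l g)).
by apply: eq_bigr => i _; rewrite boxplus_scalel iter_boxplus_l.
Qed.

Lemma LD_boxplus_r c f g : boxplus d m f (LD c g) = LD c (boxplus d m f g).
Proof.
rewrite /LD (big_morph (fun h => boxplus d m f h) (fun x y => boxplus_addr f x y) (boxplus0r f)).
by apply: eq_bigr => i _; rewrite boxplus_scaler iter_boxplus_r.
Qed.

End Proof.

Theorem mainTheorem14 (R : numFieldType) (d m : nat) (c : seq R) (f g : {poly R}) :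
  (1 <= d)%N -> (d <= m)%N ->
  (size f <= d.+1)%N -> (size g <= d.+1)%N ->
  let p := embed d m f in
  let q := embed d m g in
  Lop c (boxplus2 d m p q) = boxplus2 d m (Lop c p) q /\
  boxplus2 d m (Lop c p) q = boxplus2 d m p (Lop c q).
Proof.
move=> _ dm _ _ p q; rewrite /p /q (boxplus2_embed _ _ _ dm) !(Lop_embed _ _ _ dm) !(boxplus2_embed _ _ _ dm).
by rewrite (LD_boxplus_l _ _ _ dm) (LD_boxplus_r _ _ _ dm).
Qed.
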